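(* Let $\mathbb{L}/\mathbb{K}$ be a finite Galois extension of degree $N$ with Galois group $G$, let $a\in\mathbb{L}[G]$, let $\mathcal{B}=(\beta_1,\dots,\beta_N)$ be a $\mathbb{K}$-basis of $\mathbb{L}$, and set $\mathbf{v}=(a(\beta_1),\dots,a(\beta_N))$. Then \[\mathrm{rk}_\mathbb{K}(a)=\dim_\mathbb{L}\big(\mathbb{L}[G]/\mathrm{Ann}_{\mathbb{L}[G]}(a)\big)=\mathrm{rk}_\mathbb{L}(M_G(\mathbf{v}))=\mathrm{rk}_\mathbb{L}(D_G(a)).\]
   Context: $\mathbb{L}[G]=\{\sum_ga_gg:a_g\in\mathbb{L}\}$ with composition product $(ag)\circ(bh)=(a\,g(b))(gh)$; $a$ acts on $\mathbb{L}$ by $x\mapsto\sum a_gg(x)$ and $\mathrm{rk}_\mathbb{K}(a)$ is the rank of this $\mathbb{K}$-linear map. $\mathrm{Ann}_{\mathbb{L}[G]}(a)=\{f\in\mathbb{L}[G]:f\circ a=0\}$. With $G=\{g_1,\dots,g_N\}$ ordered, $M_G(\mathbf{v})=(g_i(v_j))_{i,j}$ is the $G$-Moore matrix and $D_G(a)$ is the $G$-Dickson matrix with entries $D_G(a)_{g,h}=h(a_{h^{-1}g})$ (rows/columns indexed by $G$). *)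

(* Defs.v *)
From HB Require Import structures.
From mathcomp Require Import all_boot all_order all_algebra all_fingroup all_field.
Set Implicit Arguments. Unset Strict Implicit. Unset Printing Implicit Defensive.
Import GRing.Theory.
Local Open Scope ring_scope.

(* G = gal_of {:L}, the group of F-automorphisms of L,
   i.e. 'Gal({:L} / 1).  Mathcomp's group law on gal_of is written
   "diagrammatically": (x * y)%g a = y (x a); so the paper's g∘h is (h * g)%g. *)

Section SkewGroupAlgebra.
Variables (F : fieldType) (L : splittingFieldType F).

Notation G := (gal_of (fullv : {vspace L})).

(* 𝕃[G] : formal sums \sum_g a_g g, an L-vector space (left scalars). *)
Definition LG := {ffun G -> L^o}.

Definition LGact (a : LG) (x : L) : L := \sum_(g : G) a g * g x.

Definition LGend (a : LG) : 'End(L) := linfun (LGact a).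

Definition rkK (a : LG) : nat := \dim (limg (LGend a)).

(* composition product: (f ∘ b)_k = \sum_{g∘h = k} f_g g(b_h) *)
Definition LGcomp (f b : LG) : LG :=
  [ffun k : G => \sum_(g : G) \sum_(h : G | (h * g)%g == k) f g * g (b h)].

Definition Ann (a : LG) : {vspace LG} := lker (linfun (fun f : LG => LGcomp f a)).

Definition dimQuotAnn (a : LG) : nat := (\dim (fullv : {vspace LG}) - \dim (Ann a))%N.

Definition gidx (i : 'I_#|{: G}|) : G := enum_val i.

Definition MooreG n (v : n.-tuple L) : 'M[L]_(#|{: G}|, n) :=
  \matrix_(i, j) (gidx i) (tnth v j).

(* G-Dickson matrix D_G(a)_{g,h} = h(a_{h^{-1} g}), h^{-1}∘g = (g * h^-1)%g *)
Definition DicksonG (a : LG) : 'M[L]_#|{: G}| :=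
  \matrix_(i, j) (gidx j) (a ((gidx i) * (gidx j)^-1)%g).

End SkewGroupAlgebra.

(* Main.v *)
Require Import Defs.
From HB Require Import structures.
From mathcomp Require Import all_boot all_order all_algebra all_fingroup all_field.
Set Implicit Arguments. Unset Strict Implicit. Unset Printing Implicit Defensive.
Local Open Scope ring_scope.
Import GRing.Theory.

Lemma trace_nz (F : fieldType) (L : splittingFieldType F) :
  exists a0 : L, \sum_(g : gal_of (fullv : {vspace L})) g a0 != 0.
Proof.
have [a _ Ha] := @gal_independent_contra F L fullv predT (fun _ => 1) 1%g isT (oner_neq0 _).
by exists a; move: Ha; under eq_bigr do rewrite mul1r.
Qed.

Lemma gal_full_all (F : fieldType) (L : splittingFieldType F)
  (g : gal_of (fullv : {vspace L})) : g \in 'Gal(fullv / 1%AS)%g.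
Proof. by rewrite gal_kAut ?sub1v // kAut1E limg_gal. Qed.

Lemma trace_in1 (F : fieldType) (L : splittingFieldType F)
  (HG : galois 1%AS (fullv : {vspace L})) (y : L) :
  \sum_(g : gal_of (fullv : {vspace L})) g y \in 1%VS.
Proof.
have := mem_galTrace HG (memvf y); rewrite /galTrace.
by rewrite (eq_bigl predT) // => g; rewrite gal_full_all.
Qed.

Lemma galVK (F : fieldType) (L : splittingFieldType F)
  (g : gal_of (fullv : {vspace L})) (b : L) : (g^-1)%g (g b) = b.
Proof. by rewrite -galM ?memvf // mulgV gal_id. Qed.

Lemma indep (F : fieldType) (L : splittingFieldType F)
  (HG : galois 1%AS (fullv : {vspace L})) d (b : d.-tuple L) (fb : free b)
  (x : 'I_d -> L) :
  (forall g : gal_of (fullv : {vspace L}), \sum_k g (tnth b k) * x k = 0) ->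
  forall k, x k = 0.
Proof.
move=> Hx.
pose T (y : L) := \sum_(g : gal_of (fullv : {vspace L})) g y.
have HT : forall lam k, T (lam * x k) = 0.
  move=> lam.
  have Hs : \sum_k tnth b k * T (lam * x k) = 0.
    transitivity (\sum_(g : gal_of (fullv : {vspace L}))
                    (g^-1)%g (\sum_k g (tnth b k) * (lam * x k))).
    symmetry.
    under eq_bigr => g _ do rewrite rmorph_sum /=.
    under eq_bigr => g _ do under eq_bigr => k _ do rewrite rmorphM /= galVK.
    rewrite exchange_big /=; apply: eq_bigr => k _.
    rewrite /T mulr_sumr (reindex_inj invg_inj) /=.
    by apply: eq_bigr => g _; rewrite invgK.
    apply: big1 => g _.
    have -> : \sum_k g (tnth b k) * (lam * x k) = lam * (\sum_k g (tnth b k) * x k).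
      by rewrite mulr_sumr; apply: eq_bigr => k _; rewrite mulrCA.
    by rewrite Hx mulr0 rmorph0.
  have Hc : forall k, exists c : F, T (lam * x k) == c%:A.
    move=> k; have /vlineP[c Hcc] := trace_in1 HG (lam * x k).
    by exists c; apply/eqP; exact: Hcc.
  pose c k := xchoose (Hc k).
  have Dc : forall k, T (lam * x k) = (c k)%:A by move=> k; apply/eqP; exact: (xchooseP (Hc k)).
  have Hs2 : \sum_(k < d) c k *: b`_k = 0.
    rewrite -[RHS]Hs; apply: eq_bigr => k _.
    by rewrite Dc mulr_algr (tnth_nth 0).
  move=> k; have Hc0 : c k = 0 by move/freeP: fb => fb; exact: fb c Hs2 k.
  rewrite Dc Hc0.
  by rewrite scale0r.
move=> k; apply/eqP; apply/negP => nzx.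
have [a0 Ha0] := trace_nz L.
have := HT (a0 / x k) k; rewrite divfK; last by apply/negP.
by move=> E; move: Ha0; rewrite -/(T a0) E eqxx.
Qed.

Lemma Moore_free_rank (F : fieldType) (L : splittingFieldType F)
  (HG : galois 1%AS (fullv : {vspace L})) d (b : d.-tuple L) :
  free b -> \rank (MooreG b) = d.
Proof.
move=> fb; apply/eqP; rewrite eqn_leq rank_leq_col /=.
rewrite -mxrank_tr.
have : row_free (MooreG b)^T.
  rewrite -kermx_eq0; apply/rowV0P => u /sub_kermxP Hu.
  apply/rowP => k; rewrite mxE.
  apply: (indep HG fb (x := fun k => u 0 k)) => g.
  move/matrixP/(_ 0 (enum_rank g)): Hu; rewrite !mxE.
  move=> E; rewrite -[RHS]E; apply: eq_bigr => k0 _.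
  rewrite !mxE /gidx enum_rankK mulrC. done.
by rewrite /row_free => /eqP ->.
Qed.

Lemma Moore_mul (F : fieldType) (L : splittingFieldType F) n m
  (w : n.-tuple L) (u : m.-tuple L) (c : 'I_m -> 'I_n -> F) :
  (forall j, tnth w j = \sum_k c k j *: tnth u k) ->
  MooreG w = MooreG u *m \matrix_(k, j) (c k j)%:A.
Proof.
move=> Hw; apply/matrixP => i j; rewrite !mxE Hw linear_sum.
by apply: eq_bigr => k _; rewrite linearZ /= !mxE mulr_algr.
Qed.

Lemma Moore_rank (F : fieldType) (L : splittingFieldType F)
  (HG : galois 1%AS (fullv : {vspace L})) n (w : n.-tuple L) :
  \rank (MooreG w) = \dim <<w>>.
Proof.
set b := vbasis <<w>>%VS.
have E1 := @Moore_mul F L n _ w b (fun k j => coord b k (tnth w j)).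
have E2 := @Moore_mul F L _ n b w (fun j k => coord w j (tnth b k)).
have H1 : forall j, tnth w j = \sum_k coord b k (tnth w j) *: tnth b k.
  move=> j; rewrite {1}(coord_vbasis (memv_span (mem_tnth j w))).
  by apply: eq_bigr => k _; rewrite -tnth_nth.
have H2 : forall k, tnth b k = \sum_j coord w j (tnth b k) *: tnth w j.
  move=> k; rewrite {1}(coord_span (vbasis_mem (mem_tnth k b))).
  by apply: eq_bigr => j _; rewrite -tnth_nth.
have Hb : \rank (MooreG b) = \dim <<w>>%VS.
  by apply: Moore_free_rank => //; exact: basis_free (vbasisP _).
apply/eqP; rewrite eqn_leq; apply/andP; split.
  by rewrite (E1 H1); apply: leq_trans (mxrankM_maxl _ _) _; rewrite Hb.
have : (\rank (MooreG b) <= \rank (MooreG w))%N.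
  by rewrite {1}(E2 H2); exact: mxrankM_maxl.
by rewrite Hb.
Qed.

Lemma LGact_linear (F : fieldType) (L : splittingFieldType F) (a : LG L) :
  linear (LGact a).
Proof.
move=> c x y; rewrite /LGact scaler_sumr -big_split; apply: eq_bigr => g _ /=.
by rewrite linearP /= mulrDr scalerAr.
Qed.

HB.instance Definition _ (F : fieldType) (L : splittingFieldType F) (a : LG L) :=
  GRing.isSemilinear.Build F L L _ (LGact a) (GRing.semilinear_linear (LGact_linear a)).

Lemma LGendE (F : fieldType) (L : splittingFieldType F) (a : LG L) x :
  LGend a x = LGact a x.
Proof. by rewrite /LGend lfunE. Qed.

Lemma rkK_span (F : fieldType) (L : splittingFieldType F)
  (a : LG L) (beta : (\dim (fullv : {vspace L})).-tuple L)
  (Hbeta : basis_of fullv beta) :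
  rkK a = \dim <<[tuple of map (LGact a) beta]>>.
Proof.
have Hs : <<beta>>%VS = fullv by case/andP: Hbeta => /eqP.
rewrite /rkK; transitivity (\dim (LGend a @: <<beta>>)); first by rewrite Hs.
rewrite limg_span /=; congr (\dim <<_>>).
by apply: eq_map => x; rewrite LGendE.
Qed.

Lemma Dickson_fact (F : fieldType) (L : splittingFieldType F)
  (a : LG L) n (beta : n.-tuple L) :
  MooreG [tuple of map (LGact a) beta] = (DicksonG a)^T *m MooreG beta.
Proof.
apply/matrixP => i j; rewrite !mxE tnth_map /LGact rmorph_sum /=.
set g := gidx i.
rewrite (reindex_inj (mulIg g^-1)%g) /=.
rewrite (reindex (@gidx F L)) /=; last by exists (@enum_rank _) => x _; [exact: enum_valK | exact: enum_rankK].
apply: eq_bigr => k _; rewrite !mxE rmorphM /= -/g.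
by rewrite -galM ?memvf // mulgKV.
Qed.

Lemma span_rows_dim (K : fieldType) (vT : vectType K) m n (A : 'M[K]_(m, n))
  (phi : {linear 'rV[K]_n -> vT}) (phiI : injective phi) :
  \dim <<[seq phi (row i A) | i <- enum 'I_m]>> = \rank A.
Proof.
set B := row_base A.
pose X := [tuple phi (row k B) | k < \rank A].
have phiS : forall p (c : 'rV_p) (M : 'M_(p, n)),
    phi (c *m M) = \sum_k c 0 k *: phi (row k M).
  by move=> p c M; rewrite mulmx_sum_row linear_sum; apply: eq_bigr => k _; rewrite linearZ.
have eqS : <<[seq phi (row i A) | i <- enum 'I_m]>>%VS = <<X>>%VS.
  apply/eqP; rewrite eqEsubv; apply/andP; split; apply/span_subvP => y.
    case/mapP => i _ ->.
    have : (row i A <= B)%MS by rewrite eq_row_base row_sub.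
    case/submxP => D ->; rewrite phiS; apply: rpred_sum => k _; apply: memvZ.
    by apply: memv_span; have := mem_tnth k X; rewrite tnth_mktuple.
  case/tnthP => k ->; rewrite tnth_mktuple.
  have : (row k B <= A)%MS by rewrite -(eq_row_base A) row_sub.
  case/submxP => D ->; rewrite phiS; apply: rpred_sum => i _; apply: memvZ.
  by apply: memv_span; apply: map_f; rewrite mem_enum.
rewrite eqS.
have fX : free X.
  apply/freeP => c Hc k.
  have H0 : phi (\row_i c i *m B) = phi 0.
    rewrite linear0 phiS -[RHS]Hc; apply: eq_bigr => i _.
    by rewrite mxE -tnth_nth tnth_mktuple.
  have /(row_free_inj (row_base_free A)) : \row_i c i *m B = 0 *m B.
    by rewrite mul0mx; exact: phiI H0.
  by move/rowP/(_ k); rewrite !mxE.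
by move: fX; rewrite /free size_tuple => /eqP.
Qed.

Lemma ffunDg (aT : finType) (rT : zmodType) (f g : {ffun aT -> rT}) x :
  (f + g) x = f x + g x.
Proof. by rewrite ffunE. Qed.
Lemma ffunZg (R : pzRingType) (aT : finType) (rT : lmodType R) c (f : {ffun aT -> rT}) x :
  (c *: f) x = c *: f x.
Proof. by rewrite ffunE. Qed.

Definition LGcompr (F : fieldType) (L : splittingFieldType F) (a f : LG L) : LG L :=
  LGcomp f a.

Lemma LGcompr_linear (F : fieldType) (L : splittingFieldType F) (a : LG L) :
  linear (LGcompr a).
Proof.
move=> c f h; apply/ffunP => k; rewrite /LGcompr /LGcomp ffunDg ffunZg !ffunE.
rewrite scaler_sumr -big_split; apply: eq_bigr => g _ /=.
rewrite scaler_sumr -big_split; apply: eq_bigr => x _ /=.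
by rewrite ffunDg ffunZg mulrDl scalerAl.
Qed.

HB.instance Definition _ (F : fieldType) (L : splittingFieldType F) (a : LG L) :=
  GRing.isSemilinear.Build L (LG L) (LG L) _ (LGcompr a)
    (GRing.semilinear_linear (LGcompr_linear a)).

Definition rowfun (F : fieldType) (L : splittingFieldType F)
  (r : 'rV[L]_#|{: gal_of (fullv : {vspace L})}|) : LG L :=
  [ffun k => r 0 (enum_rank k)].

Lemma rowfun_linear (F : fieldType) (L : splittingFieldType F) :
  linear (@rowfun F L).
Proof. by move=> c r s; apply/ffunP => k; rewrite !ffunE !mxE. Qed.

HB.instance Definition _ (F : fieldType) (L : splittingFieldType F) :=
  GRing.isSemilinear.Build L _ (LG L) _ (@rowfun F L)
    (GRing.semilinear_linear (@rowfun_linear F L)).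

Lemma rowfun_inj (F : fieldType) (L : splittingFieldType F) :
  injective (@rowfun F L).
Proof.
move=> r s /ffunP E; apply/rowP => i.
by have := E (gidx i); rewrite !ffunE /gidx enum_valK.
Qed.

Definition delta (F : fieldType) (L : splittingFieldType F)
  (g : gal_of (fullv : {vspace L})) : LG L := [ffun k => (k == g)%:R].

Lemma delta_decomp (F : fieldType) (L : splittingFieldType F) (f : LG L) :
  f = \sum_i f (gidx i) *: delta (gidx i).
Proof.
apply/ffunP => k; rewrite sum_ffunE (bigD1 (enum_rank k)) //= big1 ?addr0.
  by rewrite ffunZg ffunE /gidx enum_rankK eqxx; rewrite /GRing.scale /= mulr1.
move=> i ne; rewrite ffunZg ffunE /gidx.
case: eqP => [Ek|_]; last by rewrite scaler0.
by move: ne; rewrite Ek enum_valK eqxx.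
Qed.

Lemma LGcomp_delta (F : fieldType) (L : splittingFieldType F) (a : LG L) i :
  LGcomp (delta (gidx i)) a = rowfun (row i (DicksonG a)^T).
Proof.
apply/ffunP => k; rewrite !ffunE !mxE.
rewrite (bigD1 (gidx i)) //= [X in _ + X]big1 ?addr0; last first.
  move=> g ne; apply: big1 => h _; rewrite ffunE.
  by rewrite (negbTE ne) mul0r.
rewrite ffunE eqxx.
rewrite (big_pred1 (k * (gidx i)^-1)%g); last first.
  by move=> h /=; apply/eqP/eqP => [<-|->]; [rewrite mulgK | rewrite mulgKV].
by rewrite mul1r /gidx enum_rankK.
Qed.

Lemma dimQuot_rank (F : fieldType) (L : splittingFieldType F) (a : LG L) :
  dimQuotAnn a = \rank (DicksonG a).
Proof.
pose psi := linfun (fun f : LG L => LGcomp f a).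
have psiE : forall f, psi f = LGcomp f a.
  by move=> f; rewrite /psi (@lfunE _ _ _ (LGcompr a)).
have -> : dimQuotAnn a = \dim (limg psi).
  rewrite /dimQuotAnn /Ann -/psi.
  by have := limg_ker_dim psi fullv; rewrite capfv => <-; rewrite addKn.
rewrite -mxrank_tr -(span_rows_dim (DicksonG a)^T (@rowfun_inj F L)).
congr (\dim _); apply/eqP; rewrite eqEsubv; apply/andP; split.
  apply/subvP => y /memv_imgP [f _ ->].
  rewrite [f]delta_decomp linear_sum; apply: rpred_sum => i _.
  rewrite linearZ /=; apply: memvZ; rewrite psiE LGcomp_delta.
  by apply: memv_span; apply: map_f; rewrite mem_enum.
apply/span_subvP => y /mapP [i _ ->].
apply/memv_imgP; exists (delta (gidx i)); first exact: memvf.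
by rewrite psiE LGcomp_delta.
Qed.

Unset Implicit Arguments.

Theorem mainTheorem8 (F : fieldType) (L : splittingFieldType F)
  (HG : galois 1%AS (fullv : {vspace L}))
  (a : LG L) (beta : (\dim (fullv : {vspace L})).-tuple L)
  (Hbeta : basis_of fullv beta) :
  let v := [tuple of map (LGact a) beta] in
  rkK a = dimQuotAnn a /\
  dimQuotAnn a = \rank (MooreG v) /\
  \rank (MooreG v) = \rank (DicksonG a).
Proof.
move=> v.
have R1 : rkK a = \rank (MooreG v).
  rewrite (rkK_span a Hbeta); exact: (esym (Moore_rank HG v)).
have R3 := dimQuot_rank a.
have Hcard : #|{: gal_of (fullv : {vspace L})}| = \dim (fullv : {vspace L}).
  have := galois_dim HG; rewrite dimv1 divn1 => ->.
  have -> : 'Gal(fullv / 1%AS)%g = [set: gal_of (fullv : {vspace L})].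
    by apply/setP => g; rewrite inE gal_full_all.
  by rewrite cardsT.
have R2 : \rank (MooreG v) = \rank (DicksonG a).
  rewrite Dickson_fact mxrankMfree ?mxrank_tr //.
  rewrite /row_free (Moore_free_rank HG (basis_free Hbeta)) Hcard.
  by [].
by rewrite R1 -R2 R3.
Qed.
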